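(* Let $x_0\in\mathbb{R}$, $r>0$, and let $F:(x_0-r,x_0+r)\to\mathbb{R}$ be of class $C^1$ with $F(x_0)=x_0$ and $|F'(x_0)|<1$. Then there exists $r_1\in(0,r)$ such that for every $x_1\in(x_0-r_1,x_0+r_1)$, the sequence defined by $x_{n+1}=F(x_n)$ has $\dim_BS(x_1)=0$, where $S(x_1)=\{x_n:n\ge1\}$.
   Context: For a bounded set $S\subset\mathbb{R}$ and $\varepsilon>0$, $S_\varepsilon=\{y: \mathrm{dist}(y,S)<\varepsilon\}$ and $|S_\varepsilon|$ is its Lebesgue measure. $\mathcal M^{*s}(S)=\limsup_{\varepsilon\to0}|S_\varepsilon|/\varepsilon^{1-s}$, $\mathcal M_*^{s}(S)=\liminf_{\varepsilon\to0}|S_\varepsilon|/\varepsilon^{1-s}$; $\overline{\dim}_BS=\inf\{s\ge0:\mathcal M^{*s}(S)=0\}$, $\underline{\dim}_BS=\inf\{s\ge0:\mathcal M_*^{s}(S)=0\}$, and $\dim_BS$ is their common value when equal. *)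

(* Defs.v *)
From Stdlib Require Import Reals.
Open Scope R_scope.

(* Infimum of a set of reals (a real number; an empty or unbounded-below
   set has no infimum in this sense). *)
Definition is_inf (E : R -> Prop) (m : R) : Prop :=
  (forall x, E x -> m <= x) /\
  (forall m', (forall x, E x -> m' <= x) -> m' <= m).

Definition cover_sum (A : R -> Prop) (x : R) : Prop :=
  exists a b : nat -> R,
    (forall n, a n <= b n) /\
    (forall y, A y -> exists n, a n < y < b n) /\
    infinite_sum (fun n => b n - a n) x.

Definition lebesgue_measure (A : R -> Prop) (m : R) : Prop :=
  is_inf (cover_sum A) m.

Definition nbhd (S : R -> Prop) (eps : R) : R -> Prop :=
  fun y => exists x, S x /\ Rabs (y - x) < eps.

(* M^{*s}(S) = limsup_{eps->0+} |S_eps| / eps^(1-s) = 0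
   (the quotient is >= 0, so limsup = 0 iff it tends to 0). *)
Definition upper_content_zero (S : R -> Prop) (s : R) : Prop :=
  forall eta, 0 < eta -> exists delta, 0 < delta /\
    forall eps m, 0 < eps < delta -> lebesgue_measure (nbhd S eps) m ->
      m / Rpower eps (1 - s) < eta.

Definition lower_content_zero (S : R -> Prop) (s : R) : Prop :=
  forall eta, 0 < eta -> forall delta, 0 < delta ->
    exists eps m, 0 < eps < delta /\ lebesgue_measure (nbhd S eps) m /\
      m / Rpower eps (1 - s) < eta.

Definition upper_box_dim (S : R -> Prop) (d : R) : Prop :=
  is_inf (fun s => 0 <= s /\ upper_content_zero S s) d.

Definition lower_box_dim (S : R -> Prop) (d : R) : Prop :=
  is_inf (fun s => 0 <= s /\ lower_content_zero S s) d.

Definition box_dim (S : R -> Prop) (d : R) : Prop :=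
  upper_box_dim S d /\ lower_box_dim S d.

(* S(x1) = { x_n : n >= 1 } with x_{n+1} = F x_n, i.e. { F^k(x1) : k >= 0 } *)
Definition orbit (F : R -> R) (x1 : R) : R -> Prop :=
  fun y => exists k : nat, y = Nat.iter k F x1.

(* Main.v *)
Require Import Defs.
From Stdlib Require Import Reals Lra ZArith Lia.
Open Scope R_scope.

Lemma cover_sum_nonneg A x : cover_sum A x -> 0 <= x.
Proof.
  intros (a & b & Hab & _ & Hs).
  assert (H := sum_incr (fun n => b n - a n) 0 x Hs).
  simpl in H. apply Rle_trans with (b 0%nat - a 0%nat). specialize (Hab 0%nat).
  lra. apply H. intro n; specialize (Hab n); lra.
Qed.

Lemma measure_exists A x : cover_sum A x -> exists m, lebesgue_measure A m.
Proof.
  intros Hx.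
  set (E := fun y => cover_sum A (- y)).
  assert (Hb : bound E).
  { exists 0. intros y Hy. apply cover_sum_nonneg in Hy. lra. }
  assert (Hne : exists y, E y). { exists (- x). unfold E. now rewrite Ropp_involutive. }
  destruct (completeness E Hb Hne) as [l [Hl1 Hl2]].
  exists (- l). split.
  - intros z Hz. assert (E (- z)) by (unfold E; now rewrite Ropp_involutive).
    specialize (Hl1 _ H). lra.
  - intros m' Hm'. assert (l <= - m').
    { apply Hl2. intros y Hy. specialize (Hm' _ Hy). lra. }
    lra.
Qed.

Lemma cover_orbit (p : nat -> R) c eps K : 0 < eps ->
  (forall k, (K <= k)%nat -> Rabs (p k - c) <= eps) ->
  cover_sum (nbhd (fun y => exists k, y = p k) eps) (2*eps*INR K + 4*eps).
Proof.
  intros He Hk.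
  set (a := fun n => if (n <? K)%nat then p n - eps else if (n =? K)%nat then c - 2*eps else 0).
  set (b := fun n => if (n <? K)%nat then p n + eps else if (n =? K)%nat then c + 2*eps else 0).
  assert (Hs : forall n, sum_f_R0 (fun n => b n - a n) n =
     if (n <? K)%nat then 2*eps*INR (S n) else 2*eps*INR K+4*eps).
  { induction n as [|n IH].
    - simpl. unfold a, b. destruct (0 <? K)%nat eqn:E.
      + simpl; lra.
      + apply Nat.ltb_ge in E. assert (K = 0%nat) by lia. subst K. simpl. lra.
    - simpl sum_f_R0. rewrite IH. unfold a, b.
      destruct (n <? K)%nat eqn:E1; destruct (S n <? K)%nat eqn:E2.
      + rewrite S_INR. rewrite (S_INR (S n)). rewrite S_INR. lra.
      + apply Nat.ltb_lt in E1. apply Nat.ltb_ge in E2. assert (S n = K) by lia.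
        rewrite (proj2 (Nat.eqb_eq (S n) K) H). rewrite <- H. lra.
      + apply Nat.ltb_ge in E1. apply Nat.ltb_lt in E2. lia.
      + apply Nat.ltb_ge in E1. destruct (S n =? K)%nat eqn:E3.
        * apply Nat.eqb_eq in E3. lia.
        * lra. }
  exists a, b. split; [|split].
  - intro n; unfold a, b. destruct (n <? K)%nat; [lra|]. destruct (n =? K)%nat; lra.
  - intros y [x [[k ->] Hy]]. destruct (k <? K)%nat eqn:E.
    + exists k. unfold a, b. rewrite E. apply Rabs_def2 in Hy. lra.
    + exists K. unfold a, b. rewrite Nat.ltb_irrefl, Nat.eqb_refl.
      apply Nat.ltb_ge in E. specialize (Hk k E).
      apply Rabs_def2 in Hy. revert Hk; unfold Rabs; destruct (Rcase_abs (p k - c)); intro; lra.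
  - intros e He'. exists K. intros n Hn. rewrite Hs.
    destruct (n <? K)%nat eqn:E. apply Nat.ltb_lt in E; lia.
    unfold R_dist. rewrite Rminus_eq_0, Rabs_R0. lra.
Qed.

Lemma powq_le1 q k : 0 <= q <= 1 -> q ^ k <= 1.
Proof. intros. rewrite <- (pow1 k). apply pow_incr. lra. Qed.
Lemma powq_decr q K k : 0 <= q <= 1 -> (K <= k)%nat -> q ^ k <= q ^ K.
Proof. intros Hq Hk. replace k with (K + (k - K))%nat by lia. rewrite pow_add.
  pose proof (powq_le1 q (k - K) Hq). pose proof (pow_le q K (proj1 Hq)). nra. Qed.

Lemma contract (F : R -> R) (x0 r : R) (hr : 0 < r)
  (hC1 : exists F' : R -> R,
      (forall x, x0 - r < x < x0 + r -> derivable_pt_lim F x (F' x)) /\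
      (forall x, x0 - r < x < x0 + r -> continuity_pt F' x) /\
      Rabs (F' x0) < 1)
  (hfix : F x0 = x0) :
  exists r1 q, 0 < r1 < r /\ 0 < q < 1 /\
   forall x1, x0 - r1 < x1 < x0 + r1 -> forall k,
     Rabs (Nat.iter k F x1 - x0) <= q ^ k * r1.
Proof.
  destruct hC1 as (F' & Hd & Hc & Hl).
  set (q := (1 + Rabs (F' x0)) / 2).
  assert (Hq : 0 < q < 1) by (unfold q; pose proof (Rabs_pos (F' x0)); lra).
  assert (Hx0 : x0 - r < x0 < x0 + r) by lra.
  destruct (Hc x0 Hx0 ((1 - Rabs (F' x0))/2)) as (alp & Halp & Hcont). lra.
  set (r1 := Rmin alp r / 2).
  assert (Hr1 : 0 < r1 <= alp / 2 /\ r1 <= r / 2).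
  { unfold r1. unfold Rmin. destruct (Rle_dec alp r); lra. }
  assert (Hder : forall c, Rabs (c - x0) < r1 -> Rabs (F' c) <= q).
  { intros c Hcx. destruct (Req_dec c x0) as [->|Hne].
    - unfold q. lra.
    - assert (H := Hcont c). simpl in H. unfold R_dist in H.
      assert (Rabs (F' c - F' x0) < (1 - Rabs (F' x0)) / 2).
      { apply H. split. split. exact I. auto. lra. }
      pose proof (Rabs_triang_inv (F' c) (F' x0)). unfold q. lra. }
  assert (Hstep : forall y, Rabs (y - x0) < r1 -> Rabs (F y - x0) <= q * Rabs (y - x0)).
  { intros y Hy. destruct (Rtotal_order y x0) as [Hlt|[Heq|Hgt]].
    - destruct (MVT_cor2 F F' y x0 Hlt) as (c & Hc1 & Hc2).
      { intros c Hc'. apply Hd. revert Hy. unfold Rabs; destruct Rcase_abs; intros; lra. }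
      rewrite hfix in Hc1.
      assert (Rabs (c - x0) < r1) by (revert Hy; unfold Rabs; destruct Rcase_abs; destruct Rcase_abs; intros; lra).
      specialize (Hder c H).
      replace (F y - x0) with (- (F' c * (x0 - y))) by lra.
      rewrite Rabs_Ropp, Rabs_mult.
      replace (Rabs (x0 - y)) with (Rabs (y - x0)) by (rewrite <- Rabs_Ropp; f_equal; lra).
      apply Rmult_le_compat_r. apply Rabs_pos. exact Hder.
    - subst. rewrite hfix. replace (x0 - x0) with 0 by lra. rewrite Rabs_R0. lra.
    - destruct (MVT_cor2 F F' x0 y Hgt) as (c & Hc1 & Hc2).
      { intros c Hc'. apply Hd. revert Hy. unfold Rabs; destruct Rcase_abs; intros; lra. }
      rewrite hfix in Hc1.
      assert (Rabs (c - x0) < r1) by (revert Hy; unfold Rabs; destruct Rcase_abs; destruct Rcase_abs; intros; lra).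
      specialize (Hder c H).
      rewrite Hc1, Rabs_mult.
      apply Rmult_le_compat_r. apply Rabs_pos. exact Hder. }
  exists r1, q. split. lra. split. exact Hq.
  intros x1 Hx1.
  assert (Hgen : forall k, Rabs (Nat.iter k F x1 - x0) <= q ^ k * Rabs (x1 - x0)).
  { induction k as [|k IH].
    - simpl. lra.
    - simpl Nat.iter. simpl pow.
      assert (q ^ k <= 1) by (apply powq_le1; lra).
      assert (0 <= q ^ k) by (apply pow_le; lra).
      assert (Rabs (x1 - x0) < r1) by (unfold Rabs; destruct Rcase_abs; lra).
      pose proof (Rabs_pos (x1 - x0)).
      assert (Rabs (Nat.iter k F x1 - x0) < r1) by nra.
      specialize (Hstep _ H3). nra. }
  intro k. specialize (Hgen k).
  assert (Rabs (x1 - x0) < r1) by (unfold Rabs; destruct Rcase_abs; lra).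
  assert (0 <= q ^ k) by (apply pow_le; lra). nra.
Qed.

Lemma analysis q R0 s eta : 0 < q < 1 -> 0 < R0 -> 0 < s -> 0 < eta ->
  exists delta, 0 < delta /\ forall eps, 0 < eps < delta -> exists K : nat,
    R0 * q ^ K <= eps /\ 2*eps*INR K + 4*eps < eta * Rpower eps (1 - s).
Proof.
  intros Hq HR Hs He.
  set (L := - ln q).
  assert (HL : 0 < L). { unfold L. pose proof (ln_increasing q 1 (proj1 Hq) (proj2 Hq)). rewrite ln_1 in H. lra. }
  set (c := eta * exp (- s * ln R0)).
  assert (Hc : 0 < c) by (unfold c; pose proof (exp_pos (- s * ln R0)); nra).
  set (M := 4 / (s * L) + 7).
  assert (HM : 0 < M) by (unfold M; assert (0 < 4/(s*L)) by (apply Rdiv_lt_0_compat; nra); lra).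
  set (V0 := M / c).
  assert (HV0 : 0 < V0) by (unfold V0; apply Rdiv_lt_0_compat; lra).
  set (T0 := 2 * V0 / s).
  assert (HT0 : 0 < T0) by (unfold T0; apply Rdiv_lt_0_compat; lra).
  exists (R0 * exp (- T0)). split. pose proof (exp_pos (-T0)); nra.
  intros eps [He1 He2].
  set (t := ln (R0 / eps)).
  assert (HRe : 0 < R0 / eps) by (apply Rdiv_lt_0_compat; lra).
  assert (Ht : T0 < t).
  { unfold t. rewrite <- (ln_exp T0). apply ln_increasing. apply exp_pos.
    rewrite exp_Ropp in He2. pose proof (exp_pos T0).
    apply (Rmult_lt_compat_r (exp T0)) in He2; [|lra].
    replace (R0 * / exp T0 * exp T0) with R0 in He2 by (field; lra).
    apply (Rmult_lt_reg_r eps). lra. unfold Rdiv. replace (R0 * / eps * eps) with R0 by (field; lra). lra. }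
  assert (Heps : eps = R0 * exp (- t)).
  { unfold t. rewrite exp_Ropp, exp_ln by lra. field. lra. }
  set (K := Z.to_nat (up (t / L))).
  destruct (archimed (t / L)) as [Hup1 Hup2].
  assert (HtL : 0 < t / L) by (apply Rdiv_lt_0_compat; lra).
  assert (HK : INR K = IZR (up (t / L))).
  { unfold K. rewrite INR_IZR_INZ. rewrite Z2Nat.id. reflexivity.
    apply le_IZR. lra. }
  assert (HK1 : t / L < INR K) by lra.
  assert (HK2 : INR K <= t / L + 1) by lra.
  assert (HtK : t < L * INR K).
  { apply (Rmult_lt_compat_l L) in HK1; [|lra]. replace (L * (t / L)) with t in HK1 by (field; lra). lra. }
  exists K. split.
  - rewrite <- Rpower_pow by lra. unfold Rpower. replace (ln q) with (- L) by (unfold L; ring).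
    rewrite Heps. apply Rmult_le_compat_l. lra.
    left. apply exp_increasing. replace (INR K * - L) with (- (L * INR K)) by ring. lra.
  - assert (Hln : ln eps = ln R0 - t).
    { rewrite Heps, ln_mult, ln_exp. ring. lra. apply exp_pos. }
    assert (Hrp : Rpower eps (1 - s) = eps * exp (- s * ln R0) * exp (s * t)).
    { unfold Rpower. rewrite Hln.
      replace ((1 - s) * (ln R0 - t)) with ((ln R0 - t) + (- s * ln R0) + s * t) by ring.
      rewrite !exp_plus. rewrite <- Hln, exp_ln by lra. ring. }
    rewrite Hrp.
    set (v := s * t / 2).
    assert (Hv : exp (s * t) = exp v * exp v) by (rewrite <- exp_plus; f_equal; unfold v; field).
    assert (Hv0 : 0 < v) by (unfold v; nra).
    assert (Hev : 1 + v < exp v) by (apply exp_ineq1; lra).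
    assert (HvV : V0 < v).
    { unfold v. unfold T0 in Ht. apply (Rmult_lt_compat_l (s/2)) in Ht; [|lra].
      replace (s / 2 * (2 * V0 / s)) with V0 in Ht by (field; lra). lra. }
    assert (Hcv : M < c * v).
    { unfold V0 in HvV. apply (Rmult_lt_compat_l c) in HvV; [|lra].
      replace (c * (M / c)) with M in HvV by (field; lra). lra. }
    assert (HtLv : 2 * t / L = M * v - 7 * v).
    { unfold M, v. field. split; lra. }
    assert (H2K : 2 * INR K + 4 < c * exp (s * t)).
    { rewrite Hv. assert (2 * INR K + 4 <= 2 * t / L + 6).
      { unfold Rdiv at 1. replace (2 * t * / L) with (2 * (t / L)) by (unfold Rdiv; ring). lra. }
      assert (c * ((1 + v) * (1 + v)) < c * (exp v * exp v)).
      { apply Rmult_lt_compat_l. lra. nra. }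
      nra. }
    replace (eta * (eps * exp (- s * ln R0) * exp (s * t))) with (eps * (c * exp (s * t))) by (unfold c; ring).
    nra.
Qed.

Theorem theorem5 (F : R -> R) (x0 r : R) (hr : 0 < r)
  (hC1 : exists F' : R -> R,
      (forall x, x0 - r < x < x0 + r -> derivable_pt_lim F x (F' x)) /\
      (forall x, x0 - r < x < x0 + r -> continuity_pt F' x) /\
      Rabs (F' x0) < 1)
  (hfix : F x0 = x0) :
  exists r1, 0 < r1 < r /\
    forall x1, x0 - r1 < x1 < x0 + r1 -> box_dim (orbit F x1) 0.
Proof.
  destruct (contract F x0 r hr hC1 hfix) as (r1 & q & Hr1 & Hq & Hit).
  exists r1. split. lra. intros x1 Hx1.
  assert (Hkey : forall s, 0 < s -> forall eta, 0 < eta -> exists delta, 0 < delta /\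
     forall eps, 0 < eps < delta ->
       (exists m, lebesgue_measure (nbhd (orbit F x1) eps) m) /\
       forall m, lebesgue_measure (nbhd (orbit F x1) eps) m -> m / Rpower eps (1 - s) < eta).
  { intros s Hs eta Heta.
    destruct (analysis q r1 s eta Hq (proj1 Hr1) Hs Heta) as (delta & Hd & Hall).
    exists delta. split. exact Hd. intros eps Heps.
    destruct (Hall eps Heps) as (K & HK1 & HK2).
    assert (Hcov : cover_sum (nbhd (orbit F x1) eps) (2*eps*INR K + 4*eps)).
    { apply (cover_orbit (fun k => Nat.iter k F x1) x0 eps K). lra.
      intros k Hk. specialize (Hit x1 Hx1 k).
      pose proof (powq_decr q K k ltac:(lra) Hk). nra. }
    split. exact (measure_exists _ _ Hcov).
    intros m [Hm _]. specialize (Hm _ Hcov).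
    assert (Hp : 0 < Rpower eps (1 - s)) by (unfold Rpower; apply exp_pos).
    unfold Rdiv. apply (Rmult_lt_reg_r (Rpower eps (1 - s))). exact Hp.
    rewrite Rmult_assoc, Rinv_l by lra. lra. }
  split.
  - split.
    + intros x [Hx _]. exact Hx.
    + intros m' Hm'. destruct (Rle_dec m' 0) as [|Hn]; [lra|].
      assert (m' <= m' / 2); [|lra].
      apply Hm'. split. lra. intros eta Heta.
      destruct (Hkey (m' / 2) ltac:(lra) eta Heta) as (delta & Hd & Hall).
      exists delta. split. exact Hd. intros eps m He Hm. apply (proj2 (Hall eps He)). exact Hm.
  - split.
    + intros x [Hx _]. exact Hx.
    + intros m' Hm'. destruct (Rle_dec m' 0) as [|Hn]; [lra|].
      assert (m' <= m' / 2); [|lra].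
      apply Hm'. split. lra. intros eta Heta delta Hdelta.
      destruct (Hkey (m' / 2) ltac:(lra) eta Heta) as (delta' & Hd & Hall).
      set (eps := Rmin delta delta' / 2).
      assert (He : 0 < eps < delta /\ eps < delta').
      { unfold eps, Rmin. destruct (Rle_dec delta delta'); lra. }
      destruct (Hall eps ltac:(lra)) as [[m Hm] Hb].
      exists eps, m. split. lra. split. exact Hm. exact (Hb m Hm).
Qed.
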